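(* Every eaco is an existential doctrine.
   Context: A doctrine is a pair $(\mathcal{C},P)$, $\mathcal{C}$ a category with finite products, $P:\mathcal{C}^{op}\to\mathbf{Pos}$ a functor, $f^*=P(f)$; primary: each $P(A)$ has binary meets $\wedge$ preserved by each $f^*$. Elementary: primary and for every $A$ there is $\delta_A\in P(A\times A)$ such that for every $X$ the assignment $\psi\mapsto\langle\pi_1,\pi_2\rangle^*\psi\wedge\langle\pi_2,\pi_3\rangle^*\delta_A$ ($\pi_i$ the projections of $X\times A\times A$) is a left adjoint $P(X\times A)\to P(X\times A\times A)$ to $(id_X\times\Delta_A)^*$. Graph of $f:X\to A$: $\mathcal{G}(f)=(f\times id_A)^*\delta_A\in P(X\times A)$. Stable initial object: initial $0$ with $X\times0\cong0$ for all $X$. AC: for every $A$ not a stable initial object and every $\Gamma$, $\pi_\Gamma^*$ ($\pi_\Gamma:\Gamma\times A\to\Gamma$) has a left adjoint $\Sigma_{\pi_\Gamma}$ and for every $\psi\in P(\Gamma\times A)$ there is a chosen $\epsilon_\psi:\Gamma\to A$ with $\Sigma_{\pi_\Gamma}\psi=\langle id_\Gamma,\epsilon_\psi\rangle^*\psi$ (also used with factors swapped). Co-comprehension: every $P(A)$ has a bottom and for each $\alpha$ there is $\lceil\alpha\rceil:\{\alpha\}^o\to A$ with $\lceil\alpha\rceil^*\alpha=\bot$, universal (unique factorization) among $f$ with $f^*\alpha=\bot$; full if $\lceil\beta\rceil$ factoring through $\lceil\alpha\rceil$ implies $\alpha\le\beta$. An eaco is an elementary doctrine with full co-comprehension satisfying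 AC such that for every $f:X\to A$ and $\alpha\in P(A)$: $f^*\langle\epsilon_{\mathcal{G}(\lceil\alpha\rceil)},id_A\rangle^*\mathcal{G}(\lceil\alpha\rceil)=\langle\epsilon_{\mathcal{G}(\lceil f^*\alpha\rceil)},id_X\rangle^*\mathcal{G}(\lceil f^*\alpha\rceil)$ (with $\epsilon_{\mathcal{G}(\lceil\alpha\rceil)}:A\to\{\alpha\}^o$ the AC witness for the projection $\{\alpha\}^o\times A\to A$). Existential: for every product projection $f$, $f^*$ has a left adjoint $\Sigma_f$ satisfying Beck–Chevalley ($h^*\Sigma_f\gamma=\Sigma_gk^*\gamma$ for every pullback square $h\circ g=f\circ k$) and Frobenius reciprocity $\Sigma_f(\alpha\wedge f^*\beta)=\beta\wedge\Sigma_f\alpha$. *)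

(* Defs.v *)
Set Implicit Arguments.
Unset Strict Implicit.

Record Cat := {
  ob :> Type;
  hom : ob -> ob -> Type;
  idm : forall A, hom A A;
  comp : forall A B C, hom B C -> hom A B -> hom A C;
  comp_id_l : forall A B (f : hom A B), comp (idm B) f = f;
  comp_id_r : forall A B (f : hom A B), comp f (idm A) = f;
  comp_assoc : forall A B C D (h : hom C D) (g : hom B C) (f : hom A B),
      comp h (comp g f) = comp (comp h g) f
}.
Arguments hom {c} _ _.
Arguments idm {c} _.
Arguments comp {c A B C} _ _.

Record FPCat := {
  cat :> Cat;
  term : cat;
  bang : forall A : cat, hom A term;
  bang_uniq : forall (A : cat) (f : hom A term), f = bang A;
  prod : cat -> cat -> cat;
  p1 : forall A B : cat, hom (prod A B) A;
  p2 : forall A B : cat, hom (prod A B) B;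
  pair : forall X A B : cat, hom X A -> hom X B -> hom X (prod A B);
  pair_p1 : forall X A B (f : hom X A) (g : hom X B), comp (p1 A B) (pair f g) = f;
  pair_p2 : forall X A B (f : hom X A) (g : hom X B), comp (p2 A B) (pair f g) = g;
  pair_uniq : forall X A B (h : hom X (prod A B)),
      h = pair (comp (p1 A B) h) (comp (p2 A B) h)
}.
Arguments term {f0}.
Arguments prod {f0} _ _.
Arguments p1 {f0 A B}.
Arguments p2 {f0 A B}.
Arguments pair {f0 X A B} _ _.

Definition prodmap (C : FPCat) (A B A' B' : C) (f : hom A A') (g : hom B B')
  : hom (prod A B) (prod A' B') := pair (comp f p1) (comp g p2).

(** initial objects and stable initial objects (X x 0 ≅ 0, i.e. X x 0 initial) *)
Definition is_initial (C : Cat) (I : C) : Prop :=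
  forall X : C, exists f : hom I X, forall g : hom I X, g = f.
Definition stable_initial (C : FPCat) (I : C) : Prop :=
  is_initial I /\ forall X : C, is_initial (prod X I).

(** * Doctrines: functors C^op -> Pos *)
Record Doctrine (C : FPCat) := {
  P : C -> Type;
  leq : forall A, P A -> P A -> Prop;
  leq_refl : forall A (a : P A), leq a a;
  leq_trans : forall A (a b c : P A), leq a b -> leq b c -> leq a c;
  leq_antisym : forall A (a b : P A), leq a b -> leq b a -> a = b;
  rx : forall (A B : C), hom A B -> P B -> P A;          (* f^* *)
  rx_mono : forall A B (f : hom A B) (a b : P B), leq a b -> leq (rx f a) (rx f b);
  rx_id : forall A (a : P A), rx (idm A) a = a;
  rx_comp : forall A B C' (g : hom B C') (f : hom A B) (a : P C'),
      rx (comp g f) a = rx f (rx g a)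
}.
Arguments P {C} d _.
Arguments leq {C d A} _ _.
Arguments rx {C d A B} _ _.

Record Primary (C : FPCat) (D : Doctrine C) := {
  meet : forall A, P D A -> P D A -> P D A;
  meet_glb : forall A (a b c : P D A), leq c (meet a b) <-> (leq c a /\ leq c b);
  meet_rx : forall A B (f : hom A B) (a b : P D B),
      rx f (meet a b) = meet (rx f a) (rx f b)
}.
Arguments meet {C D} p {A} _ _.

(** elementary: X x A x A is bracketed as (X x A) x A; then
    <pi1,pi2> = p1, <pi2,pi3> = <p2 o p1, p2>, id_X x Delta_A = <id, p2>. *)
Record Elementary (C : FPCat) (D : Doctrine C) := {
  el_prim :> Primary D;
  delta : forall A : C, P D (prod A A);
  delta_adj : forall (X A : C) (psi : P D (prod X A)) (phi : P D (prod (prod X A) A)),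
      leq (meet el_prim (rx p1 psi) (rx (pair (comp p2 p1) p2) (delta A))) phi
      <-> leq psi (rx (pair (idm (prod X A)) p2) phi)
}.
Arguments delta {C D} e A.

Definition graph (C : FPCat) (D : Doctrine C) (E : Elementary D) (X A : C)
  (f : hom X A) : P D (prod X A) := rx (prodmap f (idm A)) (delta E A).

(** For A not stable initial: the left adjoint Sigma to pi_Gamma^* exists
    and equals <id, eps_psi>^* psi; stated via the adjunction
    <id,eps_psi>^* psi <= g  <->  psi <= pi_Gamma^* g.
    epsR: projection Gamma x A -> Gamma; epsL: the swapped version A x Gamma -> Gamma. *)
Record AC (C : FPCat) (D : Doctrine C) := {
  epsR : forall (G A : C), ~ stable_initial A -> P D (prod G A) -> hom G A;
  epsR_spec : forall (G A : C) (h : ~ stable_initial A) (psi : P D (prod G A)) (g : P D G),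
      leq (rx (pair (idm G) (epsR h psi)) psi) g <-> leq psi (rx p1 g);
  epsL : forall (A G : C), ~ stable_initial A -> P D (prod A G) -> hom G A;
  epsL_spec : forall (A G : C) (h : ~ stable_initial A) (psi : P D (prod A G)) (g : P D G),
      leq (rx (pair (epsL h psi) (idm G)) psi) g <-> leq psi (rx p2 g)
}.
Arguments epsR {C D} a {G A} _ _.
Arguments epsL {C D} a {A G} _ _.

Record CoComp (C : FPCat) (D : Doctrine C) := {
  bot : forall A, P D A;
  bot_least : forall A (a : P D A), leq (bot A) a;
  co : forall A, P D A -> C;
  ccmap : forall A (a : P D A), hom (co a) A;         (* ceil alpha *)
  cc_bot : forall A (a : P D A), rx (ccmap a) a = bot (co a);
  cc_univ : forall A (a : P D A) (X : C) (f : hom X A), rx f a = bot X ->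
      exists! g : hom X (co a), f = comp (ccmap a) g
}.
Arguments co {C D} c {A} _.
Arguments ccmap {C D} c {A} _.
Arguments bot {C D} c A.

Definition full_cocomp (C : FPCat) (D : Doctrine C) (K : CoComp D) : Prop :=
  forall A (a b : P D A),
    (exists g : hom (co K b) (co K a), ccmap K b = comp (ccmap K a) g) -> leq a b.

Record Eaco (C : FPCat) (D : Doctrine C) := {
  e_el :> Elementary D;
  e_ac : AC D;
  e_cc : CoComp D;
  e_full : full_cocomp e_cc;
  e_cond : forall (X A : C) (f : hom X A) (a : P D A)
      (h1 : ~ stable_initial (co e_cc a)) (h2 : ~ stable_initial (co e_cc (rx f a))),
      rx f (rx (pair (epsL e_ac h1 (graph e_el (ccmap e_cc a))) (idm A))
               (graph e_el (ccmap e_cc a)))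
      = rx (pair (epsL e_ac h2 (graph e_el (ccmap e_cc (rx f a)))) (idm X))
           (graph e_el (ccmap e_cc (rx f a)))
}.

Definition existential (C : FPCat) (D : Doctrine C) (Pr : Primary D) : Prop :=
  exists (SL : forall G A : C, P D (prod G A) -> P D G)
         (SR : forall A G : C, P D (prod A G) -> P D G),
    (forall (G A : C) (psi : P D (prod G A)) (g : P D G),
        leq (SL G A psi) g <-> leq psi (rx p1 g)) /\
    (forall (G A Dl : C) (h : hom Dl G) (psi : P D (prod G A)),
        rx h (SL G A psi) = SL Dl A (rx (prodmap h (idm A)) psi)) /\
    (forall (G A : C) (psi : P D (prod G A)) (b : P D G),
        SL G A (meet Pr psi (rx p1 b)) = meet Pr b (SL G A psi)) /\
    (forall (A G : C) (psi : P D (prod A G)) (g : P D G),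
        leq (SR A G psi) g <-> leq psi (rx p2 g)) /\
    (forall (A G Dl : C) (h : hom Dl G) (psi : P D (prod A G)),
        rx h (SR A G psi) = SR A Dl (rx (prodmap (idm A) h) psi)) /\
    (forall (A G : C) (psi : P D (prod A G)) (b : P D G),
        SR A G (meet Pr psi (rx p2 b)) = meet Pr b (SR A G psi)).

(* Main.v *)
Require Import Defs.
From Stdlib Require Import ClassicalEpsilon.
Set Implicit Arguments.
From Stdlib Require Import Classical.
Unset Strict Implicit.

Lemma comp_pair (C : FPCat) (X Y A B : C) (f : hom X A) (g : hom X B) (k : hom Y X) :
  comp (pair f g) k = pair (comp f k) (comp g k).
Proof.
  rewrite (pair_uniq (comp (pair f g) k)).
  rewrite !comp_assoc, pair_p1, pair_p2. reflexivity.
Qed.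

Lemma pair_id (C : FPCat) (A B : C) : pair (@p1 C A B) p2 = idm _.
Proof. rewrite (pair_uniq (idm (prod A B))), !comp_id_r. reflexivity. Qed.

Lemma comp_p1_pair (C : FPCat) (X Y A B : C) (f : hom X A) (g : hom X B) (k : hom Y X) :
  comp p1 (comp (pair f g) k) = comp f k.
Proof. rewrite comp_assoc, pair_p1; reflexivity. Qed.
Lemma comp_p2_pair (C : FPCat) (X Y A B : C) (f : hom X A) (g : hom X B) (k : hom Y X) :
  comp p2 (comp (pair f g) k) = comp g k.
Proof. rewrite comp_assoc, pair_p2; reflexivity. Qed.

Ltac hnorm := unfold prodmap; repeat (rewrite ?pair_p1, ?pair_p2, ?comp_id_l, ?comp_id_r, ?comp_pair,
  ?comp_p1_pair, ?comp_p2_pair, ?pair_id, <- ?comp_assoc in *).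

Lemma rxrx (C : FPCat) (D : Doctrine C) (X Y Z : C) (f : hom X Y) (g : hom Y Z) (a : P D Z) :
  rx f (rx g a) = rx (comp g f) a.
Proof. rewrite rx_comp; reflexivity. Qed.


Lemma meet_l (C : FPCat) (D : Doctrine C) (Pr : Primary D) A (a b : P D A) : leq (meet Pr a b) a.
Proof. apply (proj1 (proj1 (meet_glb Pr a b _) (leq_refl _))). Qed.
Lemma meet_r (C : FPCat) (D : Doctrine C) (Pr : Primary D) A (a b : P D A) : leq (meet Pr a b) b.
Proof. apply (proj2 (proj1 (meet_glb Pr a b _) (leq_refl _))). Qed.
Lemma meet_i (C : FPCat) (D : Doctrine C) (Pr : Primary D) A (a b c : P D A) :
  leq c a -> leq c b -> leq c (meet Pr a b).
Proof. intros; apply meet_glb; auto. Qed.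

Lemma top_max (C : FPCat) (D : Doctrine C) (El : Elementary D) (X A : C) (u : hom X A) (a : P D X) :
  leq a (rx (pair u u) (delta El A)).
Proof.
  set (psi := rx (@p1 C X A) a).
  pose proof (proj1 (delta_adj El psi (meet El (rx p1 psi) (rx (pair (comp p2 p1) p2) (delta El A)))) (leq_refl _)) as H.
  rewrite meet_rx in H. subst psi. rewrite !rxrx in H. hnorm.
  pose proof (rx_mono (pair (idm X) u) H) as H2.
  rewrite meet_rx in H2. rewrite !rxrx in H2. hnorm. rewrite ?rx_id in H2.
  eapply leq_trans; [exact H2| apply meet_r].
Qed.

Lemma meet_comm (C : FPCat) (D : Doctrine C) (Pr : Primary D) A (a b : P D A) : meet Pr a b = meet Pr b a.
Proof. apply leq_antisym; apply meet_i; (apply meet_l || apply meet_r). Qed.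

Lemma leib_gen (C : FPCat) (D : Doctrine C) (El : Elementary D) (X A : C) (u v : hom X A)
  (phi : P D (prod X A)) :
  leq (meet El (rx (pair u v) (delta El A)) (rx (pair (idm X) u) phi)) (rx (pair (idm X) v) phi).
Proof.
  pose proof (proj2 (delta_adj El phi (rx (pair (comp p1 p1) p2) phi))) as H.
  rewrite rxrx in H. hnorm. rewrite rx_id in H.
  specialize (H (leq_refl _)).
  pose proof (rx_mono (pair (pair (idm X) u) v) H) as H2.
  rewrite meet_rx in H2. rewrite !rxrx in H2. hnorm.
  rewrite meet_comm. exact H2.
Qed.

Lemma delta_sym (C : FPCat) (D : Doctrine C) (El : Elementary D) (X A : C) (u v : hom X A) :
  (forall t : P D X, leq t (rx (pair u v) (delta El A))) ->
  forall t : P D X, leq t (rx (pair v u) (delta El A)).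
Proof.
  intros H t.
  pose proof (leib_gen El u v (rx (pair p2 (comp u p1)) (delta El A))) as L.
  rewrite !rxrx in L. hnorm.
  eapply leq_trans; [|exact L]. apply meet_i; [apply H| apply top_max].
Qed.

Lemma leib (C : FPCat) (D : Doctrine C) (El : Elementary D) (X A : C) (u v : hom X A) (phi : P D A) :
  (forall t : P D X, leq t (rx (pair u v) (delta El A))) -> leq (rx u phi) (rx v phi).
Proof.
  intros H.
  pose proof (leib_gen El u v (rx p2 phi)) as L.
  rewrite !rxrx in L. hnorm.
  eapply leq_trans; [|exact L]. apply meet_i; [apply H| apply leq_refl].
Qed.

Lemma init_of_map (C : FPCat) (X I : C) : stable_initial I -> hom X I -> is_initial X.
Proof.
  intros [_ HI] f Y. destruct (HI X Y) as [u Hu].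
  exists (comp u (pair (idm X) f)). intros g.
  transitivity (comp g (comp p1 (pair (idm X) f))).
  - rewrite pair_p1, comp_id_r; reflexivity.
  - rewrite comp_assoc, (Hu (comp g p1)). reflexivity.
Qed.

Lemma triv (C : FPCat) (D : Doctrine C) (E : Eaco D) (Z I : C) :
  stable_initial I -> hom Z I -> forall a b : P D Z, a = b.
Proof.
  intros HI f.
  assert (G : forall a b : P D Z, leq a b).
  { intros a b. apply (@e_full _ _ E). 
    assert (Hb : is_initial (co (e_cc E) b)) by
      (apply (init_of_map HI); exact (comp f (ccmap _ b))).
    destruct (Hb (co (e_cc E) a)) as [g _]. exists g.
    destruct (Hb Z) as [f0 Hf0]. rewrite (Hf0 (ccmap _ b)), (Hf0 (comp _ g)). reflexivity. }
  intros; apply leq_antisym; apply G.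
Qed.

Lemma sect_bot (C : FPCat) (D : Doctrine C) (K : CoComp D) (X A : C) (f : hom X A) (g : hom A X) :
  comp g f = idm X -> rx f (bot K A) = bot K X.
Proof.
  intros H. apply leq_antisym; [|apply bot_least].
  eapply leq_trans. apply rx_mono. apply (bot_least K (rx g (bot K X))).
  rewrite rxrx, H, rx_id. apply leq_refl.
Qed.

Lemma co_bot_split (C : FPCat) (D : Doctrine C) (K : CoComp D) (G : C) :
  exists k : hom G (co K (bot K G)), comp (ccmap K (bot K G)) k = idm G.
Proof.
  destruct (@cc_univ _ _ K _ (bot K G) G (idm G) (rx_id _)) as [k [Hk _]].
  exists k; auto.
Qed.

Lemma bot_stab (C : FPCat) (D : Doctrine C) (E : Eaco D) (X G : C) (h : hom X G) :
  rx h (bot (e_cc E) G) = bot (e_cc E) X.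
Proof.
  set (K := e_cc E).
  destruct (classic (stable_initial (co K (bot K G)))) as [S1|N1].
  { destruct (co_bot_split K G) as [k _]. apply (triv E S1 (comp k h)). }
  destruct (classic (stable_initial (co K (rx h (bot K G))))) as [S2|N2].
  { destruct (classic (stable_initial X)) as [SX|NX].
    { apply (triv E SX (idm X)). }
    set (x := epsR (e_ac E) (G:=term) (A:=X) NX (bot K _)).
    assert (Hx : rx (comp h x) (bot K G) = bot K term).
    { apply (@sect_bot _ _ K _ _ _ (bang G)). rewrite (bang_uniq (comp (bang G) (comp h x))).
      symmetry; apply bang_uniq. }
    rewrite <- rxrx in Hx.
    destruct (@cc_univ _ _ K _ (rx h (bot K G)) _ x Hx) as [y _].
    apply (triv E S2 (comp y (bang X))). }
  pose proof (@e_cond _ _ E X G h (bot K G) N1 N2) as EC.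
  fold K in EC.
  set (c0 := ccmap K (bot K G)) in *.
  set (e0 := epsL (e_ac E) N1 (graph (e_el E) c0)) in *.
  assert (T1 : forall t : P D G, leq t (rx (pair e0 (idm G)) (graph (e_el E) c0))).
  { intros t. destruct (co_bot_split K G) as [k Hk].
    pose proof (proj1 (@epsL_spec _ _ (e_ac E) _ _ N1 (graph (e_el E) c0)
      (rx (pair e0 (idm G)) (graph (e_el E) c0))) (leq_refl _)) as L.
    fold e0 in L.
    pose proof (rx_mono (pair k (idm G)) L) as L2.
    revert L2. unfold graph. rewrite !rxrx. hnorm. fold c0 in Hk. rewrite Hk. intros L2.
    eapply leq_trans; [|exact L2]. apply top_max. }
  assert (T2 : forall t : P D X, leq t (rx h (rx (pair e0 (idm G)) (graph (e_el E) c0)))).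
  { intros t. eapply leq_trans; [apply (top_max (e_el E) h)|].
    replace (pair h h) with (comp (pair (idm G) (idm G)) h) by (hnorm; reflexivity).
    rewrite <- rxrx. apply rx_mono. apply T1. }
  rewrite EC in T2. clear EC T1.
  set (c := ccmap K (rx h (bot K G))) in *.
  set (e1 := epsL (e_ac E) N2 (graph (e_el E) c)) in *.
  revert T2. unfold graph. rewrite !rxrx. hnorm. intros H.
  apply leq_antisym; [|apply bot_least].
  pose proof (delta_sym H) as H'.
  eapply leq_trans. { rewrite <- (rx_id (rx h (bot K G))) at 1. apply (@leib _ _ (e_el E) _ _ _ _ (rx h (bot K G)) H'). }
  rewrite <- rxrx. unfold c. rewrite cc_bot.
  eapply leq_trans. { apply rx_mono. apply (bot_least K (rx c (bot K X))). }
  rewrite rxrx. eapply leq_trans. { apply (@leib _ _ (e_el E) _ _ _ _ (bot K X) H). }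
  rewrite rx_id. apply leq_refl.
Qed.

Definition SLd (C : FPCat) (D : Doctrine C) (E : Eaco D) (G A : C) (psi : P D (prod G A)) : P D G :=
  match excluded_middle_informative (stable_initial A) with
  | left _ => bot (e_cc E) G
  | right h => rx (pair (idm G) (epsR (e_ac E) h psi)) psi
  end.

Definition SRd (C : FPCat) (D : Doctrine C) (E : Eaco D) (A G : C) (psi : P D (prod A G)) : P D G :=
  match excluded_middle_informative (stable_initial A) with
  | left _ => bot (e_cc E) G
  | right h => rx (pair (epsL (e_ac E) h psi) (idm G)) psi
  end.

Lemma meet_bot (C : FPCat) (D : Doctrine C) (Pr : Primary D) (K : CoComp D) A (b : P D A) :
  meet Pr b (bot K A) = bot K A.
Proof. apply leq_antisym; [apply meet_r|apply bot_least]. Qed.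

Theorem mainTheorem11 (C : FPCat) (D : Doctrine C) (E : Eaco D) :
  existential (el_prim (e_el E)).
Proof.
  exists (SLd E), (SRd E).
  set (Pr := el_prim (e_el E)).
  split; [|split; [|split; [|split; [|split]]]].
  - intros G A psi g. unfold SLd. destruct (excluded_middle_informative (stable_initial A)) as [S|h].
    + rewrite (triv E S p2 psi (rx p1 g)). split; intros; [apply leq_refl|apply bot_least].
    + apply epsR_spec.
  - intros G A Dl k psi. unfold SLd. destruct (excluded_middle_informative (stable_initial A)) as [S|h].
    + apply bot_stab.
    + apply leq_antisym.
      * set (e := epsR (e_ac E) h psi).
        rewrite rxrx.
        replace (comp (pair (idm G) e) k) with
          (comp (prodmap k (idm A)) (pair (idm Dl) (comp e k))) by (hnorm; reflexivity).
        rewrite <- rxrx.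
        set (phi := rx (prodmap k (idm A)) psi).
        pose proof (proj1 (@epsR_spec _ _ (e_ac E) _ _ h phi (rx (pair (idm Dl) (epsR (e_ac E) h phi)) phi)) (leq_refl _)) as L.
        pose proof (rx_mono (pair (idm Dl) (comp e k)) L) as L2.
        rewrite rxrx in L2. hnorm. rewrite rx_id in L2. exact L2.
      * apply (proj2 (@epsR_spec _ _ (e_ac E) _ _ h _ _)).
        pose proof (proj1 (@epsR_spec _ _ (e_ac E) _ _ h psi (rx (pair (idm G) (epsR (e_ac E) h psi)) psi)) (leq_refl _)) as L.
        pose proof (rx_mono (prodmap k (idm A)) L) as L2.
        rewrite rxrx in L2 |- *. replace (comp p1 (prodmap k (idm A))) with (comp k (@p1 C Dl A)) in L2
          by (hnorm; reflexivity). exact L2.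
  - intros G A psi b. unfold SLd. destruct (excluded_middle_informative (stable_initial A)) as [S|h].
    + symmetry; apply meet_bot.
    + apply leq_antisym.
      * apply (proj2 (@epsR_spec _ _ (e_ac E) _ _ h _ _)).
        rewrite meet_rx. apply meet_i.
        { eapply leq_trans; [apply meet_r|apply leq_refl]. }
        { pose proof (proj1 (@epsR_spec _ _ (e_ac E) _ _ h psi (rx (pair (idm G) (epsR (e_ac E) h psi)) psi)) (leq_refl _)) as L.
          eapply leq_trans; [apply meet_l|exact L]. }
      * set (e := epsR (e_ac E) h psi).
        set (phi := meet Pr psi (rx p1 b)).
        pose proof (proj1 (@epsR_spec _ _ (e_ac E) _ _ h phi (rx (pair (idm G) (epsR (e_ac E) h phi)) phi)) (leq_refl _)) as L.
        pose proof (rx_mono (pair (idm G) e) L) as L2.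
        rewrite rxrx in L2. hnorm. rewrite rx_id in L2.
        eapply leq_trans; [|exact L2]. unfold phi. rewrite meet_rx, rxrx. hnorm. rewrite rx_id.
        rewrite meet_comm. apply leq_refl.
  - intros A G psi g. unfold SRd. destruct (excluded_middle_informative (stable_initial A)) as [S|h].
    + rewrite (triv E S p1 psi (rx p2 g)). split; intros; [apply leq_refl|apply bot_least].
    + apply epsL_spec.
  - intros A G Dl k psi. unfold SRd. destruct (excluded_middle_informative (stable_initial A)) as [S|h].
    + apply bot_stab.
    + apply leq_antisym.
      * set (e := epsL (e_ac E) h psi).
        rewrite rxrx.
        replace (comp (pair e (idm G)) k) with
          (comp (prodmap (idm A) k) (pair (comp e k) (idm Dl))) by (hnorm; reflexivity).
        rewrite <- rxrx.
        set (phi := rx (prodmap (idm A) k) psi).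
        pose proof (proj1 (@epsL_spec _ _ (e_ac E) _ _ h phi (rx (pair (epsL (e_ac E) h phi) (idm Dl)) phi)) (leq_refl _)) as L.
        pose proof (rx_mono (pair (comp e k) (idm Dl)) L) as L2.
        rewrite rxrx in L2. hnorm. rewrite rx_id in L2. exact L2.
      * apply (proj2 (@epsL_spec _ _ (e_ac E) _ _ h _ _)).
        pose proof (proj1 (@epsL_spec _ _ (e_ac E) _ _ h psi (rx (pair (epsL (e_ac E) h psi) (idm G)) psi)) (leq_refl _)) as L.
        pose proof (rx_mono (prodmap (idm A) k) L) as L2.
        rewrite rxrx in L2 |- *. replace (comp p2 (prodmap (idm A) k)) with (comp k (@p2 C A Dl)) in L2
          by (hnorm; reflexivity). exact L2.
  - intros A G psi b. unfold SRd. destruct (excluded_middle_informative (stable_initial A)) as [S|h].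
    + symmetry; apply meet_bot.
    + apply leq_antisym.
      * apply (proj2 (@epsL_spec _ _ (e_ac E) _ _ h _ _)).
        rewrite meet_rx. apply meet_i.
        { eapply leq_trans; [apply meet_r|apply leq_refl]. }
        { pose proof (proj1 (@epsL_spec _ _ (e_ac E) _ _ h psi (rx (pair (epsL (e_ac E) h psi) (idm G)) psi)) (leq_refl _)) as L.
          eapply leq_trans; [apply meet_l|exact L]. }
      * set (e := epsL (e_ac E) h psi).
        set (phi := meet Pr psi (rx p2 b)).
        pose proof (proj1 (@epsL_spec _ _ (e_ac E) _ _ h phi (rx (pair (epsL (e_ac E) h phi) (idm G)) phi)) (leq_refl _)) as L.
        pose proof (rx_mono (pair e (idm G)) L) as L2.
        rewrite rxrx in L2. hnorm. rewrite rx_id in L2.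
        eapply leq_trans; [|exact L2]. unfold phi. rewrite meet_rx, rxrx. hnorm. rewrite rx_id.
        rewrite meet_comm. apply leq_refl.
Qed.
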